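(* Let $\mathfrak{g}$, $A$, $E$, $S$, $p_1,\dots,p_r$, $\widehat p_1,\dots,\widehat p_r$ be as in the context and let $h^\vee$ be the dual Coxeter number of $\mathfrak{g}$. Suppose there is a polynomial $f\in\mathbb{C}[u_1,\dots,u_r]$, homogeneous of degree $h^\vee$ for the grading $\deg u_i=d_i-1$, such that $f(\widehat p_1,\dots,\widehat p_r)=0$ in $E$ and the coefficient of $u_1^{h^\vee}$ in $f$ is nonzero. Then $S^{h^\vee}=0$ in $A$.
   Context: Let $\mathfrak{g}$ be a simple finite-dimensional complex Lie algebra with a fixed nondegenerate invariant symmetric bilinear form, used to identify $\mathfrak{g}$ with $\mathfrak{g}^*$. Let $n=\dim\mathfrak{g}$, let $e_1,\dots,e_n$ be an orthonormal basis with coordinates $z_1,\dots,z_n$. Let $R$ be the exterior algebra on odd generators $x_1,\dots,x_n,y_1,\dots,y_n$ ($R\cong\wedge(\mathfrak{g}\oplus\mathfrak{g})$), bigraded with $x_a$ in degree $(1,0)$, $y_a$ in degree $(0,1)$, with $\mathfrak{g}$ acting by derivations so that $(x_a)$, $(y_a)$ transform as coordinates of two copies of $\mathfrak{g}$. Put $X=\sum_a x_ae_a$, $Y=\sum_a y_ae_a$, and for $U=\sum u_ae_a$, $V=\sum v_ae_a$ with $u_a,v_a$ odd set $\{U,V\}=\sum_{a,b}u_av_b[e_a,e_b]$. Let $I\subset R$ be the ideal generated by the $e_c$-coefficients of $\{X,X\}$, $\{X,Y\}$, $\{Y,Y\}$, and $A=R/I$. Let $S$ be the image in $A$ of $\sum_a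 x_ay_a$ (proportional to $\mathrm{Tr}_V(XY)$ for a nontrivial irreducible representation $V$). Let $J\subset R$ be the ideal generated by the $e_c$-coefficients of $\{X,X\}$ and $\{Y,Y\}$, and $E=(R/J)^{\mathfrak{g}}$. For homogeneous $F\in(S\mathfrak{g})^{\mathfrak{g}}$ of degree $\ge2$ define $\widehat F=\sum_{a,b}\frac{\partial^2F}{\partial z_a\partial z_b}(\{X,Y\})\,x_ay_b\in E$, substituting for $z_c$ the $e_c$-coefficient of $\{X,Y\}$. Let $p_1,\dots,p_r$ be homogeneous algebraically independent generators of $(S\mathfrak{g})^{\mathfrak{g}}$ of degrees $d_1=2\le\dots\le d_r$ (so $p_1$ is the quadratic invariant). *)

(* Defs.v *)
From HB Require Import structures.
From mathcomp Require Import all_boot all_order all_algebra.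
From mathcomp Require Import mpoly.
From mathcomp Require Import complex.
From mathcomp Require Import reals.

Set Implicit Arguments.
Unset Strict Implicit.
Unset Printing Implicit Defensive.

Import Order.TTheory GRing.Theory Num.Theory.
Local Open Scope ring_scope.

Notation Cplx R := (R[i])%C.

Section Lie.
Variables (F : fieldType) (n : nat).

(* A Lie algebra g = F^n given in an orthonormal basis e_1..e_n (for the    *)
(* standard dot product, which plays the role of the fixed invariant form)   *)
(* by its structure constants: [e_a, e_b] = \sum_c c a b c e_c.              *)
Definition lie_br (c : 'I_n -> 'I_n -> 'I_n -> F) (u v : 'rV[F]_n) : 'rV[F]_n :=
  \row_k \sum_a \sum_b u 0 a * v 0 b * c a b k.

Definition basis_vec (i : 'I_n) : 'rV[F]_n := \row_j (i == j)%:R.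

Definition is_orthonormal_lie (c : 'I_n -> 'I_n -> 'I_n -> F) : Prop :=
  [/\ forall u v, lie_br c u v = - lie_br c v u,
      forall u v w, lie_br c u (lie_br c v w) + lie_br c v (lie_br c w u)
                    + lie_br c w (lie_br c u v) = 0
    & forall u v w, (lie_br c u v *m w^T) = (u *m (lie_br c v w)^T)].

Definition lie_ideal (c : 'I_n -> 'I_n -> 'I_n -> F) (V : 'M[F]_n) : Prop :=
  forall u v : 'rV[F]_n, (u <= V)%MS -> (lie_br c u v <= V)%MS.

Definition lie_simple (c : 'I_n -> 'I_n -> 'I_n -> F) : Prop :=
  (exists u v, lie_br c u v != 0) /\
  forall V : 'M[F]_n, lie_ideal c V -> \rank V = 0%N \/ \rank V = n.

Definition ad_mx (c : 'I_n -> 'I_n -> 'I_n -> F) (u : 'rV[F]_n) : 'M[F]_n :=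
  \matrix_(i, j) lie_br c u (basis_vec i) 0 j.

Definition killing (c : 'I_n -> 'I_n -> 'I_n -> F) (u v : 'rV[F]_n) : F :=
  \tr (ad_mx c u *m ad_mx c v).

Definition toral (c : 'I_n -> 'I_n -> 'I_n -> F) (H : 'M[F]_n) : Prop :=
  (forall u v, (u <= H)%MS -> (v <= H)%MS -> lie_br c u v = 0) /\
  (forall u, (u <= H)%MS -> diagonalizable (ad_mx c u)).

Definition cartan (c : 'I_n -> 'I_n -> 'I_n -> F) (H : 'M[F]_n) : Prop :=
  toral c H /\ forall H' : 'M[F]_n, toral c H' -> (H <= H')%MS -> (H' <= H)%MS.

(* roots of H, identified with elements t of H via the Killing form:        *)
(* alpha(h) = killing t h; the root alpha is nonzero and has a nonzero root  *)
(* vector.  (alpha, alpha) w.r.t. the Killing form is then killing t t.      *)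
Definition root_of (c : 'I_n -> 'I_n -> 'I_n -> F) (H : 'M[F]_n) (t : 'rV[F]_n) : Prop :=
  [/\ (t <= H)%MS, t != 0 &
      exists2 x : 'rV[F]_n, x != 0 &
        forall h, (h <= H)%MS -> lie_br c h x = killing c t h *: x].

End Lie.

(* Dual Coxeter number: (theta, theta) = 1 / h^vee for the Killing form,     *)
(* theta a long root (= a root of maximal length).                           *)
Definition dual_coxeter (R : realType) (n : nat)
  (c : 'I_n -> 'I_n -> 'I_n -> Cplx R) (hv : nat) : Prop :=
  exists H : 'M[Cplx R]_n, cartan c H /\
   exists2 t, root_of c H t &
     killing c t t = (hv%:R)^-1 /\
     forall t', root_of c H t' -> killing c t' t' <= killing c t t.

(* The exterior algebra R = /\(g + g) on generators x_1..x_n, y_1..y_n.       *)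
(* Generator number i < n is x_i (lshift), n + i is y_i (rshift).  Elements   *)
(* are functions from subsets (monomials in increasing order) to scalars.     *)
Section Exterior.
Variables (F : fieldType) (n : nat).

Definition ext := {ffun {set 'I_(n + n)} -> F}.

Definition ext_sign (A B : {set 'I_(n + n)}) : F :=
  (-1) ^+ #|[set p : 'I_(n + n) * 'I_(n + n) |
             [&& p.1 \in A, p.2 \in B & (p.2 < p.1)%N]]|.

Definition ext_mul (u v : ext) : ext :=
  [ffun S => \sum_(A : {set 'I_(n + n)}) \sum_(B : {set 'I_(n + n)}
       | [disjoint A & B] && (A :|: B == S)) ext_sign A B * u A * v B].

Definition ext_one : ext := [ffun S => (S == set0)%:R].
Definition ext_add (u v : ext) : ext := [ffun S => u S + v S].
Definition ext_scale (a : F) (u : ext) : ext := [ffun S => a * u S].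
Definition ext_zero : ext := [ffun _ => 0].
Definition ext_sum (I : Type) (s : seq I) (f : I -> ext) : ext :=
  foldr (fun i acc => ext_add (f i) acc) ext_zero s.
Definition ext_exp (u : ext) (k : nat) : ext := iter k (ext_mul u) ext_one.

Definition ext_gen (i : 'I_(n + n)) : ext := [ffun S => (S == [set i])%:R].
Definition xg (a : 'I_n) : ext := ext_gen (lshift n a).
Definition yg (a : 'I_n) : ext := ext_gen (rshift n a).

Definition in_ideal (I : Type) (gens : I -> ext) (z : ext) : Prop :=
  exists l : seq (ext * I * ext),
    z = ext_sum l (fun t => ext_mul (ext_mul t.1.1 (gens t.1.2)) t.2).

(* e_c-coefficients of {U,V} = sum_{a,b} u_a v_b [e_a, e_b] *)
Definition brace (c : 'I_n -> 'I_n -> 'I_n -> F) (u v : 'I_n -> ext) (k : 'I_n) : ext :=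
  ext_sum (enum 'I_n) (fun a => ext_sum (enum 'I_n) (fun b =>
     ext_scale (c a b k) (ext_mul (u a) (v b)))).

(* generators of I : coefficients of {X,X}, {X,Y}, {Y,Y} *)
Definition gens_I (c : 'I_n -> 'I_n -> 'I_n -> F) (k : 'I_n * 'I_3) : ext :=
  match nat_of_ord k.2 with
  | 0%N => brace c xg xg k.1
  | 1%N => brace c xg yg k.1
  | _ => brace c yg yg k.1
  end.

(* generators of J : coefficients of {X,X}, {Y,Y} *)
Definition gens_J (c : 'I_n -> 'I_n -> 'I_n -> F) (k : 'I_n * bool) : ext :=
  if k.2 then brace c xg xg k.1 else brace c yg yg k.1.

Definition S_elt : ext := ext_sum (enum 'I_n) (fun a => ext_mul (xg a) (yg a)).

(* evaluation of a polynomial at (pairwise commuting, even) elements of R *)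
Definition ext_eval (m : nat) (P : {mpoly F[m]}) (v : 'I_m -> ext) : ext :=
  ext_sum (msupp P) (fun mm => ext_scale (P@_mm)
     (foldr (fun i acc => ext_mul (ext_exp (v i) (mm i)) acc) ext_one (enum 'I_m))).

(* hat F = sum_{a,b} (d^2 F / dz_a dz_b)({X,Y}) x_a y_b *)
Definition hat (c : 'I_n -> 'I_n -> 'I_n -> F) (P : {mpoly F[n]}) : ext :=
  ext_sum (enum 'I_n) (fun a => ext_sum (enum 'I_n) (fun b =>
    ext_mul (ext_eval (mderiv b (mderiv a P)) (brace c xg yg))
            (ext_mul (xg a) (yg b)))).

End Exterior.

(* Invariant polynomials (S g)^g  (g acting by derivations on coordinates)   *)
Definition invariant_poly (F : fieldType) (n : nat)
  (c : 'I_n -> 'I_n -> 'I_n -> F) (P : {mpoly F[n]}) : Prop :=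
  forall a : 'I_n,
    \sum_(b < n) \sum_(k < n) c a b k *: ('X_b * mderiv k P) = 0.

(* p_1..p_r: homogeneous, algebraically independent generators of (S g)^g  *)
(* of nondecreasing degrees d_1 = 2 <= ... <= d_r (index 0 = p_1).          *)
Definition invariant_generators (F : fieldType) (n r : nat)
  (c : 'I_n -> 'I_n -> 'I_n -> F) (p : 'I_r -> {mpoly F[n]}) (d : 'I_r -> nat) : Prop :=
  [/\ forall i, invariant_poly c (p i),
      forall i, p i \is (d i).-homog,
      forall Q : {mpoly F[n]}, invariant_poly c Q ->
        exists P : {mpoly F[r]}, Q = comp_mpoly [tuple p i | i < r] P,
      forall P : {mpoly F[r]}, comp_mpoly [tuple p i | i < r] P = 0 -> P = 0
    & (forall i j : 'I_r, (i <= j)%N -> (d i <= d j)%N) /\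
      (forall i : 'I_r, nat_of_ord i = 0%N -> d i = 2%N)].

Definition wt_homog (F : fieldType) (r : nat) (d : 'I_r -> nat) (D : nat)
  (f : {mpoly F[r]}) : Prop :=
  forall m, m \in msupp f -> (\sum_(i < r) m i * (d i).-1)%N = D.

(* Main.v *)
Require Import Defs.
From HB Require Import structures.
From mathcomp Require Import all_boot all_order all_algebra.
From mathcomp Require Import mpoly.
From mathcomp Require Import complex.
From mathcomp Require Import reals.
From mathcomp Require Import ring zify.
Import GRing.Theory Num.Theory.
Local Open Scope ring_scope.
Set Implicit Arguments.
Unset Strict Implicit.
Unset Printing Implicit Defensive.


Section ExtAlg.
Variables (F : fieldType) (n : nat).
Local Notation ext := {ffun {set 'I_(n + n)} -> F}.
Local Notation T := {set 'I_(n + n)}.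
Local Notation mul := (@ext_mul F n).

Lemma ext_addE (u v : ext) : ext_add u v = u + v.
Proof. by apply/ffunP => S; rewrite !ffunE. Qed.
Lemma ext_zeroE : ext_zero F n = 0.
Proof. by apply/ffunP => S; rewrite !ffunE. Qed.
Local Notation sc := (@ext_scale F n).
Lemma sc0 (u : ext) : sc 0 u = 0.
Proof. by apply/ffunP => S; rewrite !ffunE mul0r. Qed.
Lemma scN1 (u : ext) : sc (-1) u = - u.
Proof. by apply/ffunP => S; rewrite !ffunE mulN1r. Qed.
Lemma sc1 (u : ext) : sc 1 u = u.
Proof. by apply/ffunP => S; rewrite !ffunE mul1r. Qed.
Lemma scr0 a : sc a 0 = 0.
Proof. by apply/ffunP => S; rewrite !ffunE mulr0. Qed.
Lemma scA a b (u : ext) : sc a (sc b u) = sc (a * b) u.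
Proof. by apply/ffunP => S; rewrite !ffunE mulrA. Qed.
Lemma scDr a (u v : ext) : sc a (u + v) = sc a u + sc a v.
Proof. by apply/ffunP => S; rewrite !ffunE mulrDr. Qed.
Lemma sc_sum a (I : Type) (s : seq I) (P : pred I) (f : I -> ext) :
  sc a (\sum_(i <- s | P i) f i) = \sum_(i <- s | P i) sc a (f i).
Proof.
apply/ffunP => S; rewrite ffunE !sum_ffunE mulr_sumr.
by apply: eq_bigr => i _; rewrite ffunE.
Qed.
Lemma ext_sumE (I : Type) (s : seq I) (f : I -> ext) :
  ext_sum s f = \sum_(i <- s) f i.
Proof.
elim: s => [|x s IH] /=; first by rewrite big_nil ext_zeroE.
by rewrite big_cons ext_addE IH.
Qed.

Lemma emulDl (u1 u2 v : ext) : mul (u1 + u2) v = mul u1 v + mul u2 v.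
Proof.
apply/ffunP => S; rewrite !ffunE -big_split /=; apply: eq_bigr => A _.
rewrite -big_split /=; apply: eq_bigr => B _.
by rewrite !ffunE mulrDr mulrDl.
Qed.
Lemma emulDr (u v1 v2 : ext) : mul u (v1 + v2) = mul u v1 + mul u v2.
Proof.
apply/ffunP => S; rewrite !ffunE -big_split /=; apply: eq_bigr => A _.
rewrite -big_split /=; apply: eq_bigr => B _.
by rewrite !ffunE mulrDr.
Qed.
Lemma emulZl a (u v : ext) : mul (sc a u) v = sc a (mul u v).
Proof.
apply/ffunP => S; rewrite !ffunE mulr_sumr; apply: eq_bigr => A _.
rewrite mulr_sumr; apply: eq_bigr => B _.
by rewrite !ffunE; ring.
Qed.
Lemma emulZr a (u v : ext) : mul u (sc a v) = sc a (mul u v).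
Proof.
apply/ffunP => S; rewrite !ffunE mulr_sumr; apply: eq_bigr => A _.
rewrite mulr_sumr; apply: eq_bigr => B _.
by rewrite !ffunE; ring.
Qed.
Lemma emul0l (v : ext) : mul 0 v = 0.
Proof. by rewrite -[X in mul X v](sc0 0) emulZl sc0. Qed.
Lemma emul0r (v : ext) : mul v 0 = 0.
Proof. by rewrite -[X in mul v X](sc0 0) emulZr sc0. Qed.
Lemma emulNl (u v : ext) : mul (- u) v = - mul u v.
Proof. by rewrite -[X in mul X v]scN1 emulZl scN1. Qed.
Lemma emul_suml (I : Type) (s : seq I) (P : pred I) (f : I -> ext) v :
  mul (\sum_(i <- s | P i) f i) v = \sum_(i <- s | P i) mul (f i) v.
Proof.
elim: s => [|x s IH]; first by rewrite !big_nil emul0l.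
by rewrite !big_cons; case: (P x); rewrite ?emulDl IH.
Qed.
Lemma emul_sumr (I : Type) (s : seq I) (P : pred I) (f : I -> ext) v :
  mul v (\sum_(i <- s | P i) f i) = \sum_(i <- s | P i) mul v (f i).
Proof.
elim: s => [|x s IH]; first by rewrite !big_nil emul0r.
by rewrite !big_cons; case: (P x); rewrite ?emulDr IH.
Qed.

Definition eb (A : T) : ext := [ffun S => (S == A)%:R].

Lemma ext_decomp (u : ext) : u = \sum_A sc (u A) (eb A).
Proof.
apply/ffunP => S; rewrite sum_ffunE (bigD1 S) //= big1 ?addr0.
  by rewrite !ffunE eqxx mulr1.
by move=> A /negPf nAS; rewrite !ffunE eq_sym nAS mulr0.
Qed.

Lemma mul_eb A B : mul (eb A) (eb B) =
  if [disjoint A & B] then sc (ext_sign F A B) (eb (A :|: B)) else 0.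
Proof.
apply/ffunP => S; rewrite ffunE (bigD1 A) //= [X in _ + X]big1 ?addr0; last first.
  move=> A' /negPf nA; rewrite big1 // => B' _; rewrite !ffunE nA.
  by rewrite mulr0 mul0r.
rewrite big_mkcond (bigD1 B) //= [X in _ + X]big1 ?addr0; last first.
  by move=> B' /negPf nB; rewrite !ffunE nB mulr0 if_same.
rewrite !ffunE !eqxx !mulr1.
case dAB: [disjoint A & B] => /=; rewrite ?ffunE //.
by rewrite eq_sym; case: eqP; rewrite ?mulr0 ?mulr1.
Qed.


Definition PS (A B : T) := [set p : 'I_(n + n) * 'I_(n + n) |
             [&& p.1 \in A, p.2 \in B & (p.2 < p.1)%N]].
Lemma signE (A B : T) : ext_sign F A B = (-1) ^+ #|PS A B|.
Proof. by []. Qed.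

Lemma signUl (A B C : T) : [disjoint A & B] ->
  ext_sign F (A :|: B) C = ext_sign F A C * ext_sign F B C.
Proof.
move=> dAB; rewrite !signE -exprD.
have -> : PS (A :|: B) C = PS A C :|: PS B C.
  by apply/setP => p; rewrite !inE; case: (p.1 \in A); case: (p.1 \in B); case: (p.2 \in C); case: (p.2 < p.1)%N.
rewrite cardsU.
have -> : PS A C :&: PS B C = set0.
  apply/setP => p; rewrite !inE; case pA: (p.1 \in A) => //=.
  by rewrite (disjointFr dAB pA) andbF.
by rewrite cards0 subn0.
Qed.

Lemma signUr (A B C : T) : [disjoint B & C] ->
  ext_sign F A (B :|: C) = ext_sign F A B * ext_sign F A C.
Proof.
move=> dBC; rewrite !signE -exprD.
have -> : PS A (B :|: C) = PS A B :|: PS A C.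
  by apply/setP => p; rewrite !inE; case: (p.1 \in A); case: (p.2 \in B); case: (p.2 \in C); case: (p.2 < p.1)%N.
rewrite cardsU.
have -> : PS A B :&: PS A C = set0.
  apply/setP => p; rewrite !inE; apply/negbTE; apply/negP => /andP[/and3P[_ pB _] /and3P[_ pC _]].
  by rewrite (disjointFr dBC pB) in pC.
by rewrite cards0 subn0.
Qed.

Lemma dUl (A B C : T) :
  [disjoint A :|: B & C] = [disjoint A & C] && [disjoint B & C].
Proof. by rewrite -!setI_eq0 setIUl setU_eq0. Qed.
Lemma dUr (A B C : T) :
  [disjoint A & B :|: C] = [disjoint A & B] && [disjoint A & C].
Proof. by rewrite -!setI_eq0 setIUr setU_eq0. Qed.
Lemma d0l (A : T) : [disjoint set0 & A].
Proof. by rewrite -setI_eq0 set0I. Qed.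
Lemma d0r (A : T) : [disjoint A & set0].
Proof. by rewrite -setI_eq0 setI0. Qed.

Lemma assoc_eb (A B C : T) :
  mul (mul (eb A) (eb B)) (eb C) = mul (eb A) (mul (eb B) (eb C)).
Proof.
rewrite !mul_eb.
case dAB: [disjoint A & B]; case dBC: [disjoint B & C];
  rewrite ?emul0l ?emul0r ?emulZl ?emulZr ?mul_eb ?dUl ?dUr ?dAB ?dBC ?andbF ?scr0 //=.
rewrite andbT; case dAC: [disjoint A & C]; rewrite ?scr0 //.
by rewrite !scA setUA signUl // signUr //; congr sc; ring.
Qed.

Lemma assoc2 (A B : T) (w : ext) :
  mul (mul (eb A) (eb B)) w = mul (eb A) (mul (eb B) w).
Proof.
rewrite [w]ext_decomp !emul_sumr; apply: eq_bigr => C _.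
by rewrite !emulZr assoc_eb.
Qed.
Lemma assoc3 (A : T) (v w : ext) :
  mul (mul (eb A) v) w = mul (eb A) (mul v w).
Proof.
rewrite [v]ext_decomp !(emul_sumr, emul_suml); apply: eq_bigr => B _.
by rewrite !(emulZl, emulZr) assoc2.
Qed.
Lemma emulA (u v w : ext) : mul (mul u v) w = mul u (mul v w).
Proof.
rewrite [u]ext_decomp !emul_suml; apply: eq_bigr => A _.
by rewrite !emulZl assoc3.
Qed.

Lemma one_eb : ext_one F n = eb set0.
Proof. by []. Qed.

Lemma sign0l (B : T) : ext_sign F set0 B = 1.
Proof.
rewrite signE (_ : PS set0 B = set0) ?cards0 ?expr0 //.
by apply/setP => p; rewrite !inE.
Qed.
Lemma sign0r (B : T) : ext_sign F B set0 = 1.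
Proof.
rewrite signE (_ : PS B set0 = set0) ?cards0 ?expr0 //.
by apply/setP => p; rewrite !inE andbF.
Qed.

Lemma emul1l (u : ext) : mul (ext_one F n) u = u.
Proof.
rewrite [u]ext_decomp emul_sumr; apply: eq_bigr => B _.
rewrite emulZr one_eb mul_eb d0l sign0l set0U sc1 //.
Qed.
Lemma emul1r (u : ext) : mul u (ext_one F n) = u.
Proof.
rewrite [u]ext_decomp emul_suml; apply: eq_bigr => B _.
rewrite emulZl one_eb mul_eb d0r sign0r setU0 sc1 //.
Qed.


Section Ideal.
Variables (I : Type) (g : I -> ext).
Local Notation J := (in_ideal g).

Lemma ideal0 : J 0.
Proof. by exists [::]; rewrite /= ext_zeroE. Qed.

Lemma idealD x y : J x -> J y -> J (x + y).
Proof.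
move=> [l1 ->] [l2 ->]; exists (l1 ++ l2).
by rewrite !ext_sumE big_cat.
Qed.

Lemma idealMl a x : J x -> J (mul a x).
Proof.
move=> [l ->]; exists [seq (mul a t.1.1, t.1.2, t.2) | t <- l].
rewrite !ext_sumE big_map emul_sumr; apply: eq_bigr => t _ /=.
by rewrite !emulA.
Qed.

Lemma idealMr a x : J x -> J (mul x a).
Proof.
move=> [l ->]; exists [seq (t.1.1, t.1.2, mul t.2 a) | t <- l].
rewrite !ext_sumE big_map emul_suml; apply: eq_bigr => t _ /=.
by rewrite !emulA.
Qed.

Lemma idealZ a x : J x -> J (sc a x).
Proof.
move=> Jx; have -> : sc a x = mul (sc a (ext_one F n)) x by rewrite emulZl emul1l.
exact: idealMl.
Qed.

Lemma idealN x : J x -> J (- x).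
Proof. by move=> Jx; rewrite -scN1; apply: idealZ. Qed.

Lemma idealB x y : J x -> J y -> J (x - y).
Proof. by move=> Jx Jy; apply: idealD => //; apply: idealN. Qed.

Lemma ideal_gen k : J (g k).
Proof.
exists [:: (ext_one F n, k, ext_one F n)].
by rewrite /= ext_addE ext_zeroE addr0 emul1l emul1r.
Qed.

Lemma ideal_sum (K : Type) (s : seq K) (P : pred K) (f : K -> ext) :
  (forall i, P i -> J (f i)) -> J (\sum_(i <- s | P i) f i).
Proof.
move=> H; elim: s => [|x s IH]; first by rewrite big_nil; apply: ideal0.
by rewrite big_cons; case Px: (P x) => //; apply: idealD => //; apply: H.
Qed.

End Ideal.

Lemma ideal_sub (I1 I2 : Type) (g1 : I1 -> ext) (g2 : I2 -> ext) (phi : I1 -> I2) z :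
  (forall k, g1 k = g2 (phi k)) -> in_ideal g1 z -> in_ideal g2 z.
Proof.
move=> H [l ->]; exists [seq (t.1.1, phi t.1.2, t.2) | t <- l].
rewrite !ext_sumE big_map; apply: eq_bigr => t _ /=.
by rewrite H.
Qed.

Lemma ext_exp_in (I : Type) (g : I -> ext) u k :
  in_ideal g u -> (0 < k)%N -> in_ideal g (ext_exp u k).
Proof.
by case: k => // k Ju _; rewrite /ext_exp iterS; apply: idealMr.
Qed.

Lemma ext_expS u k : ext_exp u k.+1 = mul u (ext_exp u k).
Proof. by rewrite /ext_exp iterS. Qed.

Lemma ext_expZ a u k : ext_exp (sc a u) k = sc (a ^+ k) (ext_exp u k).
Proof.
elim: k => [|k IH]; first by rewrite expr0 sc1.
by rewrite !ext_expS IH emulZl emulZr scA exprS.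
Qed.

Definition prodm (m : nat) (v : 'I_m -> ext) (mm : 'X_{1..m}) (s : seq 'I_m) :=
  foldr (fun i acc => mul (ext_exp (v i) (mm i)) acc) (ext_one F n) s.

Lemma ext_evalE (m : nat) (P : {mpoly F[m]}) (v : 'I_m -> ext) :
  ext_eval P v = \sum_(mm <- msupp P) sc (P@_mm) (prodm v mm (enum 'I_m)).
Proof. by rewrite /ext_eval ext_sumE. Qed.

Lemma prodm_in (I : Type) (g : I -> ext) (m : nat) (v : 'I_m -> ext)
  (mm : 'X_{1..m}) (s : seq 'I_m) i :
  i \in s -> (0 < mm i)%N -> in_ideal g (v i) -> in_ideal g (prodm v mm s).
Proof.
move=> + mi Jv; elim: s => [|j s IH] //=; rewrite inE => /orP[/eqP <-|iS].
  by apply: idealMr; apply: ext_exp_in.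
by apply: idealMl; apply: IH.
Qed.

Lemma eval_in (I : Type) (g : I -> ext) (m : nat) (P : {mpoly F[m]}) (v : 'I_m -> ext) :
  (forall mm, mm \in msupp P -> exists i, (0 < mm i)%N /\ in_ideal g (v i)) ->
  in_ideal g (ext_eval P v).
Proof.
move=> H; rewrite ext_evalE big_seq; apply: ideal_sum => mm /H [i [mi Ji]].
by apply: idealZ; apply: (prodm_in (i := i)) => //; rewrite mem_enum.
Qed.

Lemma prodm0 (m : nat) (v : 'I_m -> ext) (s : seq 'I_m) :
  prodm v 0%MM s = ext_one F n.
Proof. by elim: s => //= i s ->; rewrite mnm0E emul1l. Qed.

Lemma prodm_single (m : nat) (v : 'I_m -> ext) (mm : 'X_{1..m}) (s : seq 'I_m) i0 :
  uniq s -> (forall i, i != i0 -> mm i = 0%N) ->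
  prodm v mm s = if i0 \in s then ext_exp (v i0) (mm i0) else ext_one F n.
Proof.
move=> + H; elim: s => [|j s IH] //= /andP[js us]; rewrite inE IH //.
have [eji|ji] := eqVneq j i0.
  by subst i0; rewrite ?eqxx /= (negPf js) emul1r.
have ij : (i0 == j) = false by rewrite eq_sym (negPf ji).
by rewrite H //= emul1l.
Qed.

Lemma ext_evalC (m : nat) (c : F) (v : 'I_m -> ext) :
  ext_eval c%:MP v = sc c (ext_one F n).
Proof.
rewrite ext_evalE msuppC; case: eqP => [->|_]; first by rewrite big_nil sc0.
by rewrite big_seq1 mcoeffC eqxx mulr1 prodm0.
Qed.

End ExtAlg.


Section Poly.
Variables (C : numClosedFieldType) (n : nat).
Implicit Types (p q : {mpoly C[n]}).

Lemma coefD2 p a b (mm : 'X_{1..n}) :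
  (mderiv b (mderiv a p))@_mm =
  p@_(mm + U_(b) + U_(a))%MM *+ ((mm + U_(b))%MM a).+1 *+ (mm b).+1.
Proof. by rewrite !mcoeff_mderiv. Qed.


Lemma natC_neq0 k : (k.+1)%:R != (0 : C).
Proof. by rewrite pnatr_eq0. Qed.

Lemma mulrn_neq0 (x : C) k : x != 0 -> x *+ k.+1 != 0.
Proof. by move=> x0; rewrite -mulr_natr mulf_neq0 // natC_neq0. Qed.

Lemma hmdeg p d mm : p \is d.-homog -> mm \in msupp p -> mdeg mm = d.
Proof. by move=> h; apply: (dhomog_mf h). Qed.

Lemma D2_homog p d a b mm : p \is d.-homog ->
  mm \in msupp (mderiv b (mderiv a p)) -> (mdeg mm + 2 = d)%N.
Proof.
move=> hp; rewrite mcoeff_msupp coefD2 => nz.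
have : (mm + U_(b) + U_(a))%MM \in msupp p.
  by rewrite mcoeff_msupp; apply: contraNneq nz => ->; rewrite !mul0rn.
move/(hmdeg hp); rewrite !mdegD !mdeg1 => <-.
by rewrite -addnA.
Qed.

Lemma hess_const p a b : p \is 2.-homog ->
  mderiv b (mderiv a p) = ((mderiv b (mderiv a p))@_0)%:MP.
Proof.
move=> hp; apply/mpolyP => mm; rewrite mcoeffC.
have [->|nz] := eqVneq mm 0%MM; first by rewrite mulr1.
rewrite mulr0; apply/eqP; rewrite mcoeff_eq0; apply/negP => /(D2_homog hp).
move=> /eqP; rewrite -{2}[2%N]add0n eqn_add2r mdeg_eq0.
by rewrite (negPf nz).
Qed.

Lemma hom2_zero p : p \is 2.-homog ->
  (forall a b, (mderiv b (mderiv a p))@_0 = 0) -> p = 0.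
Proof.
move=> hp H; apply/mpolyP => mm; rewrite mcoeff0.
apply/eqP; rewrite mcoeff_eq0; apply/negP => Hm.
have dm := hmdeg hp Hm.
case: (pickP (fun a => mm a != 0%N)) => [a /= ma|all0]; last first.
  have mm0 : mm = 0%MM by apply/mnmP => i; rewrite mnm0E; move/negbFE/eqP: (all0 i).
  by move: dm; rewrite mm0 mdeg0.
have lea : (U_(a) <= mm)%MM by rewrite lep1mP.
have E1 := submK lea.
have : mdeg (mm - U_(a))%MM == 1%N.
  by move: dm; rewrite -{1}E1 mdegD mdeg1 addn1 => -[->].
case/mdeg1P => b /eqP Eb.
have := H a b; rewrite coefD2 add0m -Eb E1 => /eqP.

move: Hm; rewrite mcoeff_msupp => Hm.
by rewrite (negPf (mulrn_neq0 _ (mulrn_neq0 _ Hm))).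
Qed.

Lemma mderivXU (b l : 'I_n) : mderiv l ('X_b : {mpoly C[n]}) = ((b == l)%:R)%:MP.
Proof.
rewrite mderivX mnm1E; case: eqP => [->|_]; last by rewrite scale0r mpolyC0.
have -> : (U_(l) - U_(l))%MM = 0%MM.
  by apply/mnmP => i; rewrite mnmBE subnn mnm0E.
by rewrite mpolyX0 scale1r mpolyC1.
Qed.

Lemma sum_delta (F : 'I_n -> C) l : \sum_b (b == l)%:R * F b = F l.
Proof.
rewrite (bigD1 l) //= eqxx mul1r big1 ?addr0 // => b /negPf ->.
by rewrite mul0r.
Qed.

Definition hs p (k j : 'I_n) := (mderiv j (mderiv k p))@_0.

Lemma termD2 p (b k l j : 'I_n) : p \is 2.-homog ->
  (mderiv j (mderiv l ('X_b * mderiv k p)))@_0 =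
  (b == l)%:R * hs p k j + (b == j)%:R * hs p k l.
Proof.
move=> hp; rewrite !mderivM !mderivXU !mderivD !mderivM !mderivXU !mderivC.
rewrite [mderiv l (mderiv k p)](hess_const _ _ hp) mderivC.
by rewrite mul0r mulr0 !add0r addr0 mcoeffD !mcoeffCM mcoeffC eqxx mulr1.
Qed.

Lemma inv_identity (c : 'I_n -> 'I_n -> 'I_n -> C) p :
  p \is 2.-homog -> invariant_poly c p -> forall a l j,
  \sum_k c a l k * hs p k j + \sum_k c a j k * hs p k l = 0.
Proof.
move=> hp inv a l j.
have := congr1 (fun q => (mderiv j (mderiv l q))@_0) (inv a).
rewrite /= mderiv0 mderiv0 mcoeff0.
have S (q : 'I_n -> {mpoly C[n]}) : (mderiv j (mderiv l (\sum_b q b)))@_0 =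
    \sum_b (mderiv j (mderiv l (q b)))@_0.
  by rewrite (raddf_sum (mderiv (R:=C) l)) (raddf_sum (mderiv (R:=C) j))
    (raddf_sum (mcoeff (R:=C) 0%MM)).
rewrite S.
have E b : (mderiv j (mderiv l (\sum_k c a b k *: ('X_b * mderiv k p))))@_0 =
  (b == l)%:R * \sum_k c a b k * hs p k j + (b == j)%:R * \sum_k c a b k * hs p k l.
  rewrite S !mulr_sumr -big_split /=; apply: eq_bigr => k _.
  by rewrite !mderivZ mcoeffZ termD2 //; ring.
rewrite (eq_bigr _ (fun b _ => E b)) big_split /= !sum_delta => ->.
by [].
Qed.

End Poly.


Section Lie.
Variables (C : numClosedFieldType) (n : nat) (c : 'I_n -> 'I_n -> 'I_n -> C).

Lemma sum_delta' (F : 'I_n -> C) l : \sum_b (l == b)%:R * F b = F l.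
Proof.
rewrite (bigD1 l) //= eqxx mul1r big1 ?addr0 // => b; rewrite eq_sym => /negPf ->.
by rewrite mul0r.
Qed.

Lemma lie_br_basis a b : lie_br c (basis_vec C a) (basis_vec C b) = \row_k c a b k.
Proof.
apply/rowP => k; rewrite !mxE.
rewrite (eq_bigr (fun a' => (a == a')%:R * \sum_b' (b == b')%:R * c a' b' k)).
  by rewrite sum_delta' sum_delta'.
move=> a' _; rewrite mulr_sumr; apply: eq_bigr => b' _; rewrite !mxE; ring.
Qed.

Hypothesis Hlie : is_orthonormal_lie c.

Lemma c_anti a b k : c b a k = - c a b k.
Proof.
case: Hlie => H1 _ _.
have := H1 (basis_vec C b) (basis_vec C a).
by rewrite !lie_br_basis => /rowP/(_ k); rewrite !mxE.
Qed.

Lemma c_inv k a j : c k a j = c a j k.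
Proof.
case: Hlie => _ _ H3.
have := H3 (basis_vec C k) (basis_vec C a) (basis_vec C j).
rewrite !lie_br_basis => /matrixP/(_ 0 0); rewrite !mxE.
rewrite (eq_bigr (fun i => (j == i)%:R * c k a i)); last first.
  by move=> i _; rewrite !mxE; ring.
rewrite sum_delta' => ->.
rewrite (eq_bigr (fun i => (k == i)%:R * c a j i)); last first.
  by move=> i _; rewrite !mxE; ring.
by rewrite sum_delta'.
Qed.

Lemma c_skew a k j : c a k j = - c a j k.
Proof. by rewrite -c_inv c_anti. Qed.

Definition Cmx a : 'M[C]_n := \matrix_(b, k) c a b k.

Lemma lie_br_Cmx (u v : 'rV[C]_n) :
  lie_br c v u = \sum_a v 0 a *: (u *m Cmx a).
Proof.
apply/rowP => k; rewrite !mxE summxE; apply: eq_bigr => a _.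
rewrite !mxE mulr_sumr; apply: eq_bigr => b _; rewrite !mxE; ring.
Qed.

Hypothesis Hsimple : lie_simple c.

Lemma schur (M : 'M[C]_n) :
  (forall k j, M k j = M j k) ->
  (forall a l j, \sum_k c a l k * M k j + \sum_k c a j k * M k l = 0) ->
  exists lam, M = lam%:M.
Proof.
move=> Msym Hid.
have comm a : Cmx a *m M = M *m Cmx a.
  apply/matrixP => l j; rewrite !mxE.
  rewrite (eq_bigr (fun k => c a l k * M k j)); last by move=> k _; rewrite /Cmx mxE.
  have := Hid a l j; move/eqP; rewrite addr_eq0 => /eqP ->.
  rewrite -sumrN; apply: eq_bigr => k _; rewrite /Cmx !mxE c_skew Msym; ring.
have [n0|npos] := posnP n.
  by exists 0; apply/matrixP => i; have := ltn_ord i; rewrite {2}n0.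
have [lam] := eigenvalue_closed M npos.
move/eigenvalueP => [v vM vnz].
exists lam.
set A := M - lam%:M.
have commA a : Cmx a *m A = A *m Cmx a.
  by rewrite /A mulmxBr mulmxBl comm scalar_mxC.
have idV : lie_ideal c (kermx A).
  move=> u w /sub_kermxP uA; apply/sub_kermxP.
  case: Hlie => H1 _ _; rewrite H1 lie_br_Cmx mulNmx mulmx_suml.
  rewrite big1 ?oppr0 // => a _.
  by rewrite -scalemxAl -mulmxA commA mulmxA uA mul0mx scaler0.
case: (Hsimple) => _ /(_ _ idV) [r0|rn].
  exfalso; move/eqP: r0; rewrite mxrank_eq0 => /eqP V0.
  have : (v <= kermx A)%MS.
    by apply/sub_kermxP; rewrite /A mulmxBr vM mul_mx_scalar subrr.
  by rewrite V0 submx0 (negPf vnz).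
move: rn; rewrite mxrank_ker => rA.
have : \rank A = 0%N.
  have := rank_leq_row A; move: rA; lia.
move/eqP; rewrite mxrank_eq0 /A subr_eq0 => /eqP.
done.
Qed.

End Lie.

Lemma hs_lin (C : numClosedFieldType) n (p q : {mpoly C[n]}) x y a b :
  hs (x *: p - y *: q) a b = x * hs p a b - y * hs q a b.
Proof. by rewrite /hs !mderivB !mderivZ mcoeffB !mcoeffZ. Qed.

Section Hat.
Variables (C : numClosedFieldType) (n : nat) (c : 'I_n -> 'I_n -> 'I_n -> C).

Lemma brace_in (k : 'I_n) : in_ideal (gens_I c) (brace c (@xg C n) (@yg C n) k).
Proof. exact: (ideal_gen (gens_I c) (k, Ordinal (isT : (1 < 3)%N))). Qed.

Lemma hat_in (p : {mpoly C[n]}) d : p \is d.-homog -> (2 < d)%N ->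
  in_ideal (gens_I c) (hat c p).
Proof.
move=> hp d3; rewrite /hat ext_sumE; apply: ideal_sum => a _.
rewrite ext_sumE; apply: ideal_sum => b _; apply: idealMr.
apply: eval_in => mm /(D2_homog hp) Hmm.
case: (pickP (fun k => 0 < mm k)%N) => [k /= mk|all0].
  by exists k; split => //; apply: brace_in.
have : mm = 0%MM by apply/mnmP => i; rewrite mnm0E; move: (all0 i) => /=; rewrite lt0n => /negbFE/eqP.
by move=> mm0; move: Hmm d3; rewrite mm0 mdeg0 add0n => <-.
Qed.

Lemma hat_scalar (p : {mpoly C[n]}) lam : p \is 2.-homog ->
  (forall k j, hs p k j = lam * (k == j)%:R) ->
  hat c p = ext_scale lam (S_elt C n).
Proof.
move=> hp Hs; rewrite /hat /S_elt !ext_sumE sc_sum; apply: eq_bigr => a _.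
rewrite ext_sumE (bigD1_seq a) ?mem_enum ?enum_uniq //= big1 ?addr0.
  rewrite hess_const // -/(hs p a a) Hs eqxx mulr1 ext_evalC emulZl emul1l //.
move=> b ba; rewrite hess_const // -/(hs p a b) Hs eq_sym (negPf ba) mulr0.
by rewrite ext_evalC sc0 emul0l.
Qed.

Hypotheses (Hlie : is_orthonormal_lie c) (Hsimple : lie_simple c).

Lemma hs_scalar (p : {mpoly C[n]}) : p \is 2.-homog -> invariant_poly c p ->
  exists lam, forall k j, hs p k j = lam * (k == j)%:R.
Proof.
move=> hp ip.
have Hsym : forall k j, (\matrix_(k, j) hs p k j) k j = (\matrix_(k, j) hs p k j) j k.
  by move=> k j; rewrite !mxE /hs mderiv_comm.
have Hid : forall a l j, \sum_k c a l k * (\matrix_(k, j) hs p k j) k j +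
   \sum_k c a j k * (\matrix_(k, j) hs p k j) k l = 0.
  move=> a l j.
  transitivity (\sum_k c a l k * hs p k j + \sum_k c a j k * hs p k l).
    by congr (_ + _); apply: eq_bigr => k _; rewrite mxE.
  exact: inv_identity.
have [lam E] := @schur C n c Hlie Hsimple _ Hsym Hid.
exists lam => k j; move/matrixP: E => /(_ k j); rewrite !mxE => ->.
by rewrite mulr_natr.
Qed.

End Hat.

Unset Implicit Arguments.

Theorem proposition2p9 (R : realType) (n : nat)
  (c : 'I_n -> 'I_n -> 'I_n -> Cplx R)
  (Hlie : is_orthonormal_lie c) (Hsimple : lie_simple c)
  (hv : nat) (Hhv : dual_coxeter c hv)
  (r : nat) (hr : (0 < r)%N)
  (p : 'I_r -> {mpoly (Cplx R)[n]}) (d : 'I_r -> nat)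
  (Hp : invariant_generators c p d)
  (f : {mpoly (Cplx R)[r]})
  (Hf_homog : wt_homog d hv f)
  (Hf_rel : in_ideal (gens_J c) (ext_eval f (fun i => hat c (p i))))
  (Hf_coef : f@_(mnm1 (Ordinal hr) *+ hv)%MM != 0) :
  in_ideal (gens_I c) (ext_exp (S_elt (Cplx R) n) hv).
Proof.
case: Hp => Hinv Hhom _ Hind [Hsort Hd0].
set i0 := Ordinal hr.
have d0 : d i0 = 2%N by apply: Hd0.
have hp0 : p i0 \is 2.-homog by rewrite -d0.
have [lam0 Hl0] := hs_scalar Hlie Hsimple hp0 (Hinv i0).
have Xnz (i : 'I_r) : ('X_i : {mpoly (Cplx R)[r]}) != 0.
  by apply/eqP => /(congr1 (mcoeff U_(i))); rewrite mcoeffXU eqxx mcoeff0; apply/eqP; rewrite oner_eq0.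
have compX (i : 'I_r) : comp_mpoly [tuple p j | j < r] 'X_i = p i.
  by rewrite comp_mpolyXU -tnth_nth tnth_mktuple.
have lam0nz : lam0 != 0.
  apply/eqP => l0; have : p i0 = 0.
    by apply: hom2_zero => // a b; rewrite -/(hs _ a b) Hl0 l0 mul0r.
  by rewrite -compX => /Hind; apply/eqP.
have d3 (i : 'I_r) : i != i0 -> (2 < d i)%N.
  move=> ii0; have : (2 <= d i)%N by rewrite -d0; apply: Hsort.
  rewrite leq_eqVlt => /orP[/eqP d2|] //; exfalso.
  have hpi : p i \is 2.-homog by rewrite d2.
  have [lami Hli] := hs_scalar Hlie Hsimple hpi (Hinv i).
  set q := lam0 *: p i - lami *: p i0.
  have hq : q \is 2.-homog by rewrite rpredB // rpredZ.
  have q0 : q = 0.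
    apply: hom2_zero => // a b; change (hs q a b = 0).
    by rewrite /q hs_lin Hl0 Hli mulrCA subrr.
  have : comp_mpoly [tuple p j | j < r] (lam0 *: 'X_i - lami *: 'X_i0) = 0.
    by rewrite comp_mpolyB !comp_mpolyZ !compX.
  move/Hind/(congr1 (mcoeff U_(i))); rewrite mcoeffB !mcoeffZ !mcoeffXU eqxx mcoeff0.
  by rewrite eq_sym (negPf ii0) mulr0 subr0 mulr1 => /eqP; rewrite (negPf lam0nz).
pose v := fun i => hat c (p i).
have v0 : v i0 = ext_scale lam0 (S_elt (Cplx R) n) by apply: hat_scalar.
have vin (i : 'I_r) : i != i0 -> in_ideal (gens_I c) (v i).
  by move=> ii0; apply: (hat_in c (Hhom i)); apply: d3.
have EI : in_ideal (gens_I c) (ext_eval f v).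
  apply: (ideal_sub (phi := fun k : 'I_n * bool =>
     (k.1, if k.2 then Ordinal (isT : (0 < 3)%N) else Ordinal (isT : (2 < 3)%N)))) Hf_rel.
  by case=> k []. 
set m0 := (U_(i0) *+ hv)%MM.
have m0in : m0 \in msupp f by rewrite mcoeff_msupp.
move: EI; rewrite ext_evalE (bigD1_seq m0) ?msupp_uniq //=.
rewrite (@prodm_single _ _ _ v m0 (enum 'I_r) i0) ?enum_uniq ?mem_enum //; last first.
  by move=> i ii0; rewrite /m0 (mulmnE (U_(i0))%MM hv i) mnm1E eq_sym (negPf ii0).
rewrite /m0 (mulmnE (U_(i0))%MM hv i0) mnm1E eqxx mul1n v0 ext_expZ scA.
set Rest := \sum_(_ <- _ | _) _.
have RI : in_ideal (gens_I c) Rest.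
  rewrite /Rest big_seq_cond; apply: ideal_sum => mm /andP[mmin mmne].
  apply: idealZ.
  case: (pickP (fun i => (i != i0) && (0 < mm i)%N)) => [i /andP[ii0 mi]|all0].
    by apply: (@prodm_in _ _ _ _ _ v mm _ i) => //; [rewrite mem_enum | apply: vin].
  exfalso; move: mmne; rewrite -/m0 => /eqP; apply.
  have mz (i : 'I_r) : i != i0 -> mm i = 0%N.
    by move=> ii0; move: (all0 i); rewrite /= ii0 /= lt0n => /negbFE/eqP.
  have := Hf_homog _ mmin; rewrite (bigD1 i0) //= big1 ?addn0; last first.
    by move=> i ii0; rewrite mz.
  rewrite d0 muln1 => Emm.
  apply/mnmP => i; rewrite /m0 (mulmnE (U_(i0))%MM hv i) mnm1E.
  have [<-|ii0] := eqVneq i0 i; first by rewrite mul1n.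
  by rewrite mz // eq_sym.
move=> EI.
set kap := f@_m0 * lam0 ^+ hv.
have kapnz : kap != 0 by rewrite mulf_neq0 // expf_neq0.
have -> : ext_exp (S_elt (Cplx R) n) hv =
    ext_scale kap^-1 (ext_scale kap (ext_exp (S_elt (Cplx R) n) hv) + Rest - Rest).
  by rewrite addrK scA mulVf // sc1.
by apply: idealZ; apply: idealB.
Qed.
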